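(* Let $L$ be a positive integer and let $a,b,s$ be integers with $a\mid L$, $b\mid L$, $0\le s<b$, $s\in\frac{ab}{\gcd(ab,L)}\mathbb{Z}$, and let $\Lambda=\begin{pmatrix} a&0\\ s&b\end{pmatrix}\mathbb{Z}_L^2$. Let $\lambda_2=b/\gcd(b,s)$ and let $\tilde\Lambda$ be the subgroup of $\mathbb{Z}_L^2$ generated by $(\lambda_2a,0)^T$ and $(0,b)^T$. Then $$\Lambda=\bigcup_{m=0}^{\lambda_2-1}\Big((am,\ sm \bmod b)^T+\tilde\Lambda\Big).$$
   Context: $\mathbb{Z}_L=\mathbb{Z}/L\mathbb{Z}$; for an integer matrix $A$, $A\mathbb{Z}_L^2=\{Az\bmod L: z\in\mathbb{Z}_L^2\}$. $\gcd(b,0)=b$. *)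

(* Defs.v *)
From mathcomp Require Import all_boot all_order all_algebra.
Set Implicit Arguments. Unset Strict Implicit. Unset Printing Implicit Defensive.
Import Order.TTheory GRing.Theory Num.Theory.
Local Open Scope ring_scope.

(* Elements of Z_L^2 are represented by pairs of integers reduced mod L
   (canonical representatives in [0, L)). *)

Definition Lambda (L a s b : int) (p : int * int) : Prop :=
  exists z1 z2 : int, p = ((a * z1) %% L, (s * z1 + b * z2) %% L)%Z.

Definition gen_subgroup (L : int) (u v : int * int) (p : int * int) : Prop :=
  exists k l : int,
    p = ((k * u.1 + l * v.1) %% L, (k * u.2 + l * v.2) %% L)%Z.

Definition coset (L : int) (w : int * int) (H : int * int -> Prop)
  (p : int * int) : Prop :=
  exists h, H h /\ p = ((w.1 + h.1) %% L, (w.2 + h.2) %% L)%Z.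

(* Main.v *)
Require Import Defs.
From mathcomp Require Import all_boot all_order all_algebra.
From mathcomp Require Import ring.
Import Order.TTheory GRing.Theory Num.Theory.
Local Open Scope ring_scope.

Theorem proposition3p1 (L a b s : int) :
  0 < L -> (a %| L)%Z -> (b %| L)%Z -> 0 <= s < b ->
  (divz (a * b) (gcdz (a * b) L) %| s)%Z ->
  let lam2 := divz b (gcdz b s) in
  forall p : int * int,
    Lambda L a s b p <->
    exists m : int, 0 <= m < lam2 /\
      coset L (a * m, (s * m) %% b)%Z (gen_subgroup L (lam2 * a, 0) (0, b)) p.
Proof.
move=> HL _ _ /andP[s0 sb] _ lam2 p.
have b0 : 0 < b by apply: le_lt_trans sb.
have g0 : 0 < gcdz b s.
  rewrite lt_neqAle eq_sym gcdz_eq0 negb_and (gt_eqF b0) /=.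
  by rewrite /gcdz.
have hb : lam2 * gcdz b s = b by rewrite /lam2 divzK // dvdz_gcdl.
have lam0 : 0 < lam2 by rewrite -(pmulr_lgt0 _ g0) hb.
have [t hsl] : exists t, s * lam2 = b * t.
  have /dvdzP[t ht] := dvdz_gcdr b s.
  exists t; rewrite -hb {1}ht; ring.
have lamn : lam2 != 0 by rewrite gt_eqF.
have bn : b != 0 by rewrite gt_eqF.
split.
- move=> [z1 [z2 ->]].
  have ez := divz_eq z1 lam2.
  set q := (z1 %/ lam2)%Z in ez *; set m := (z1 %% lam2)%Z in ez *.
  exists m; split.
    by rewrite modz_ge0 //= -[X in _ < X]gtr0_norm // ltz_mod.
  set u := ((s * m) %/ b)%Z; set v := ((s * m) %% b)%Z.
  have es : s * m = u * b + v := divz_eq (s * m) b.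
  exists (((q * (lam2 * a) + (q * t + z2 + u) * 0) %% L)%Z,
          ((q * 0 + (q * t + z2 + u) * b) %% L)%Z).
  split.
    by exists q, (q * t + z2 + u).
  rewrite /= !modzDmr; congr (_ , _); congr (_ %% L)%Z.
    rewrite ez; ring.
  have -> : s * z1 + b * z2 = s * m + b * (q * t + z2).
    rewrite ez mulrDr [q * lam2]mulrC mulrA hsl; ring.
  rewrite es; ring.
- move=> [m [/andP[m0 mlt] [h [[k [l ->]] ->]]]].
  set u := ((s * m) %/ b)%Z; set v := ((s * m) %% b)%Z.
  have es : s * m = u * b + v := divz_eq (s * m) b.
  exists (m + k * lam2), (l - k * t - u).
  rewrite /= !modzDmr; congr (_ , _); congr (_ %% L)%Z.
    ring.
  rewrite mulrDr [k * lam2]mulrC mulrA hsl es; ring.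
Qed.
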